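(* For every $b>0$ and $0\le\delta<1$ there exists a univariate polynomial $s_{b,\delta}$ of degree $\lceil\sqrt{2\theta\log(4/\delta)}\rceil$, where $\theta=\lceil\max\{\tfrac12be^2,\log(2/\delta)\}\rceil$, such that \[ |\exp(-2t)-s_{b,\delta}^2(t)|\le2\delta+\delta^2\le3\delta\qquad\forall t\in[0,b]. \]
   Context: $\log$ is the natural logarithm and $e$ is Euler's number. *)

(* Defs.v *)
From HB Require Import structures.
From mathcomp Require Import all_boot all_order all_algebra.
From mathcomp Require Import all_classical all_reals all_analysis.
Set Implicit Arguments. Unset Strict Implicit. Unset Printing Implicit Defensive.
Import Order.TTheory GRing.Theory Num.Theory.
Local Open Scope ring_scope.

Definition theta (R : realType) (b delta : R) : R :=
  (Num.ceil (Num.max (b * expR 1 ^+ 2 / 2) (ln (2 / delta))))%:~R.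

Definition sdeg (R : realType) (b delta : R) : nat :=
  `|Num.ceil (Num.sqrt (2 * theta b delta * ln (4 / delta)))|%N.

(* Main.v *)
Require Import Defs.
From HB Require Import structures.
From mathcomp Require Import all_boot all_order all_algebra.
From mathcomp Require Import all_classical all_reals all_analysis.
From mathcomp Require Import ring lra zify.
Import Order.TTheory GRing.Theory Num.Theory numFieldNormedType.Exports.
Local Open Scope classical_set_scope.
Local Open Scope ring_scope.
Set Implicit Arguments. Unset Strict Implicit.

Section ExpFacts.
Variable R : realType.

Lemma fact_geom N k : (N.+1`! * N.+2 ^ k <= (N.+1 + k)`!)%N.
Proof.
elim: k => [|k IH]; first by rewrite expn0 muln1 addn0.
rewrite addnS factS expnS mulnCA.
apply: leq_mul => //; by rewrite ?ltnS ?leq_addr.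
Qed.

Lemma geom_le (r : R) K : 0 <= r < 1 -> \sum_(k < K) r ^+ k <= (1 - r)^-1.
Proof.
move=> /andP[r0 r1].
have h1 : 0 < 1 - r by rewrite subr_gt0.
elim: K => [|K IH]; first by rewrite big_ord0 invr_ge0 ltW.
rewrite big_ord_recl expr0.
under eq_bigr => i _ do rewrite exprS.
rewrite -mulr_sumr.
apply: (@le_trans _ _ (1 + r * (1 - r)^-1)); first by rewrite lerD2l ler_wpM2l.
rewrite le_eqVlt; apply/orP; left; apply/eqP; field; exact: lt0r_neq0.
Qed.

Lemma expR_psum (x : R) n : 0 <= x ->
  \sum_(0 <= i < n) x ^+ i / i`!%:R <= expR x.
Proof.
move=> x0; rewrite /expR.
have := @nondecreasing_cvgn_le _ (series (exp_coeff x)) _ (is_cvg_series_exp_coeff x) n.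
apply.
rewrite /series /=; apply: (@nondecreasing_series _ (exp_coeff x) xpredT 0).
by move=> k _ _; rewrite /exp_coeff /= divr_ge0 // exprn_ge0.
Qed.

Lemma exp_tail (y : R) N : `|y| <= N.+2%:R / 4 ->
  `|expR y - \sum_(0 <= i < N.+1) y ^+ i / i`!%:R| <=
    4 / 3 * (`|y| ^+ N.+1 / N.+1`!%:R).
Proof.
move=> hy.
set a := \sum_(0 <= i < N.+1) _.
set C := 4 / 3 * _.
have cv : (fun m => `|series (exp_coeff y) m - a|) @ \oo --> (`|expR y - a| : R).
  apply: cvg_norm; apply: cvgB; last exact: cvg_cst.
  exact: is_cvg_series_exp_coeff.
rewrite -(cvg_lim _ cv) //.
apply: limr_le; first by apply/cvg_ex; eexists; exact: cv.
near=> m.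
have Nm : (N.+1 <= m)%N by near: m; exists N.+1.
rewrite /series /= /a (big_cat_nat _ Nm) //= addrAC subrr add0r.
rewrite -{1}(add0n N.+1) big_addn.
set A := `|y| ^+ N.+1 / N.+1`!%:R.
set r := `|y| / N.+2%:R.
have A0 : 0 <= A by rewrite divr_ge0 // exprn_ge0.
have r0 : 0 <= r by rewrite divr_ge0.
have r4 : r <= 1/4.
  by rewrite /r ler_pdivrMr // mulrC mul1r.
apply: le_trans (ler_norm_sum _ _ _) _.
apply: (@le_trans _ _ (\sum_(0 <= i < m - N.+1) A * r ^+ i)).
  apply: ler_sum => i _.
  rewrite /exp_coeff /= normrM normfV normrX [`|_%:R|]ger0_norm //.
  have -> : A * r ^+ i = `|y| ^+ (i + N.+1) / (N.+1`! * N.+2 ^ i)%:R.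
    rewrite /A /r exprD expr_div_n natrM natrX; field.
    by rewrite expf_neq0 ?pnatr_eq0 // -lt0n fact_gt0.
  apply: ler_pM; rewrite ?exprn_ge0 ?invr_ge0 ?ler0n //.
  rewrite lef_pV2 ?posrE ?ltr0n ?muln_gt0 ?expn_gt0 ?fact_gt0 //.
  by rewrite ler_nat addnC fact_geom.
rewrite -mulr_sumr big_mkord /C mulrC.
apply: ler_wpM2r => //.
apply: le_trans (geom_le _ _) _.
  apply/andP; split => //; apply: (le_lt_trans r4); lra.
rewrite invf_ple ?posrE; last 2 first.
- lra.
- lra.
rewrite invf_div; lra.
Unshelve. all: by end_near.
Qed.

Lemma fact_double k : (2 ^ k * k`! <= (k.*2)`!)%N.
Proof.
elim: k => [|k IH] //.
rewrite doubleS !factS expnS.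
move: IH; set A := (2 ^ k)%N; set B := k`!; set C := (k.*2)`!.
rewrite -!mul2n => IH. nia.
Qed.

Lemma cosh_le (m : R) : 0 <= m -> expR m + expR (-m) <= 2 * expR (m ^+ 2 / 2).
Proof.
move=> m0.
have cv : (series (exp_coeff m) + series (exp_coeff (-m))) @ \oo --> expR m + expR (-m).
  exact: cvgD (is_cvg_series_exp_coeff m) (is_cvg_series_exp_coeff (-m)).
rewrite -(cvg_lim _ cv) //.
apply: limr_le; first by apply/cvg_ex; eexists; exact: cv.
near=> n.
rewrite /series /= !fctE -big_split /=.
set f := fun i => exp_coeff m i + exp_coeff (-m) i.
have f0 : forall i, 0 <= f i.
  move=> i; rewrite /f /exp_coeff /= -mulrDl divr_ge0 //.
  have h : - ((- m) ^+ i) <= m ^+ i.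
    apply: le_trans (ler_norm _) _.
    by rewrite normrN normrX normrN ger0_norm.
  lra.
have ev : forall k, \sum_(0 <= i < k.*2) f i =
    \sum_(0 <= j < k) 2 * (m ^+ (j.*2) / (j.*2)`!%:R).
  elim=> [|k IH]; first by rewrite !big_geq.
  rewrite doubleS big_nat_recr // big_nat_recr // IH big_nat_recr //= -addrA; congr (_ + _).
  have fE : forall i, f i = (m ^+ i + (-1) ^+ (odd i) * m ^+ i) / i`!%:R.
    by move=> i; rewrite /f /exp_coeff /= -mulrDl (exprNn m i) signr_odd.
  rewrite !fE /= !odd_double /=.
  rewrite expr0 expr1 mul1r mulN1r subrr mul0r addr0.
  ring.
apply: (@le_trans _ _ (\sum_(0 <= i < n.*2) f i)).
  rewrite [leRHS](@big_cat_nat _ _ _ n) //=; last by rewrite -addnn leq_addr.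
  by rewrite lerDl sumr_ge0.
rewrite ev -mulr_sumr.
apply: ler_pM => //; first by rewrite sumr_ge0 // => j _; rewrite divr_ge0 // exprn_ge0.
have h2 : 0 <= m ^+ 2 / 2 by rewrite divr_ge0 // sqr_ge0.
apply: (le_trans _ (expR_psum n h2)).
apply: ler_sum => j _.
have -> : (m ^+ 2 / 2) ^+ j / j`!%:R = m ^+ (j.*2) * ((2 ^ j * j`!)%:R)^-1.
  rewrite expr_div_n -exprM mul2n natrM natrX; field.
  by rewrite expf_neq0 ?pnatr_eq0 // -lt0n fact_gt0.
apply: ler_pM; rewrite ?exprn_ge0 ?invr_ge0 ?ler0n //.
rewrite lef_pV2 ?posrE ?ltr0n ?muln_gt0 ?expn_gt0 ?fact_gt0 //.
by rewrite ler_nat fact_double.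
Unshelve. all: by end_near.
Qed.

End ExpFacts.


Section Cheb.
Variable R : realType.

Fixpoint cheb (y : {poly R}) (n : nat) : {poly R} :=
  match n with
  | 0 => 1
  | 1 => y
  | (m.+1 as n').+1 => 2%:P * y * cheb y n' - cheb y m
  end.

Lemma chebSS (y : {poly R}) n : cheb y n.+2 = 2%:P * y * cheb y n.+1 - cheb y n.
Proof. by []. Qed.

Lemma cheb_eval (y : {poly R}) (t : R) n :
  (cheb y n.+2).[t] = 2 * y.[t] * (cheb y n.+1).[t] - (cheb y n).[t].
Proof. by rewrite chebSS hornerD hornerN !hornerM hornerC. Qed.

Lemma cheb_size (y : {poly R}) n : (size y <= 2)%N -> (size (cheb y n) <= n.+1)%N.
Proof.
move=> hy.
suff : (size (cheb y n) <= n.+1)%N /\ (size (cheb y n.+1) <= n.+2)%N by case.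
elim: n => [|n [IH1 IH2]]; first by split => //; rewrite size_poly1.
split => //.
rewrite chebSS; apply: leq_trans (size_polyD _ _) _.
rewrite size_polyN geq_max; apply/andP; split; last by apply: leq_trans IH1 _; lia.
have h1 := size_polyMleq (2%:P * y) (cheb y n.+1).
apply: leq_trans h1 _.
have ha : (size ((2%:P * y)%R : {poly R}) <= 2)%N.
  have h2 := size_polyMleq ((2%:R)%:P : {poly R}) y.
  apply: leq_trans h2 _.
  have h3 := size_polyC_leq1 (2 : R).
  move: h3 hy; case: (size ((2 : R)%:P)) => [|[|]] //=; lia.
move: ha IH2; case: (size ((2%:P * y)%R : {poly R})) => [|[|[|]]] //=; lia.
Qed.

Lemma cheb_cos (y : {poly R}) (t phi : R) n : y.[t] = cos phi -> (cheb y n).[t] = cos (n%:R * phi).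
Proof.
move=> hy.
suff : (cheb y n).[t] = cos (n%:R * phi) /\ (cheb y n.+1).[t] = cos (n.+1%:R * phi) by case.
elim: n => [|n [IH1 IH2]]; first by rewrite /= hornerC mul0r cos0 mul1r.
split => //.
rewrite cheb_eval IH1 IH2 hy.
have -> : n.+2%:R * phi = n.+1%:R * phi + phi by rewrite -[n.+2]addn1 natrD mulrDl mul1r.
have -> : n%:R * phi = n.+1%:R * phi - phi by rewrite -[n.+1]addn1 natrD mulrDl mul1r addrK.
rewrite cosB cosD; ring.
Qed.

Lemma cheb_bound (y : {poly R}) (t : R) n : -1 <= y.[t] <= 1 -> `|(cheb y n).[t]| <= 1.
Proof.
move=> hy.
have := @acosK R (y.[t]); rewrite in_itv /= hy => /(_ isT) /esym h.
rewrite (cheb_cos _ h) ler_norml cos_geN1 cos_le1 //.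
Qed.

End Cheb.


Section Walk.
Variable R : realType.

Fixpoint Er (s : nat) (f : int -> R) : R :=
  match s with 0 => f 0 | s'.+1 => Er s' (fun j => (f (j + 1) + f (j - 1)) / 2) end.

Fixpoint Ep (s : nat) (f : int -> {poly R}) : {poly R} :=
  match s with 0 => f 0 | s'.+1 => Ep s' (fun j => 2^-1 *: (f (j + 1) + f (j - 1))) end.

Lemma Ep_horner s (f : int -> {poly R}) (t : R) : (Ep s f).[t] = Er s (fun j => (f j).[t]).
Proof.
elim: s f => [|s IH] f //=.
rewrite IH; congr (Er s _); apply/funext => j.
by rewrite hornerZ hornerD mulrC.
Qed.

Lemma Ep_size s (f : int -> {poly R}) d : (forall j, (size (f j) <= d)%N) -> (size (Ep s f) <= d)%N.
Proof.
elim: s f => [|s IH] f hf //=.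
apply: IH => j; apply: leq_trans (size_scale_leq _ _) _.
apply: leq_trans (size_polyD _ _) _; by rewrite geq_max !hf.
Qed.

Lemma Er_lin s (a : R) (f g : int -> R) : Er s (fun j => a * f j + g j) = a * Er s f + Er s g.
Proof.
elim: s f g => [|s IH] f g //=.
rewrite -IH; congr (Er s _); apply/funext => j; ring.
Qed.

Lemma Er_cst s (c : R) : Er s (fun _ => c) = c.
Proof.
elim: s c => [|s IH] c //=.
have -> : (c + c) / 2 = c by field.
exact: IH.
Qed.

Lemma Er_scale s (a : R) (f : int -> R) : Er s (fun j => a * f j) = a * Er s f.
Proof.
have := Er_lin s a f (fun _ => 0); rewrite Er_cst addr0 => <-.
by congr (Er s _); apply/funext => j; rewrite addr0.
Qed.

Lemma Er_le s (f g : int -> R) : (forall j, f j <= g j) -> Er s f <= Er s g.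
Proof.
elim: s f g => [|s IH] f g h //=.
apply: IH => j; rewrite ler_pM2r ?invr_gt0 //; exact: lerD.
Qed.

Lemma Er_norm s (f : int -> R) : `|Er s f| <= Er s (fun j => `|f j|).
Proof.
elim: s f => [|s IH] f //=.
apply: le_trans (IH _) _; apply: Er_le => j.
rewrite normrM [`|2^-1|]ger0_norm ?invr_ge0 // ler_pM2r ?invr_gt0 //.
exact: ler_normD.
Qed.

Lemma Er_exp s (a : R) (mu : R) :
  Er s (fun j => a * expR (mu * j%:~R)) = a * ((expR mu + expR (- mu)) / 2) ^+ s.
Proof.
elim: s a => [|s IH] a /=; first by rewrite mulr0 expR0 expr0.
rewrite exprS mulrA -(IH (a * ((expR mu + expR (- mu)) / 2))).
congr (Er s _); apply/funext => j.
rewrite rmorphD rmorphB /= !mulrDr mulrN !expRD (_ : 1%:~R = 1 :> R) // mulr1.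
ring.
Qed.

End Walk.


Section Main1.
Variable R : realType.

Lemma absz_cases (j : int) :
  (absz j = 0 /\ absz (j + 1)%R = 1 /\ absz (j - 1)%R = 1)%N \/
  exists n, (absz j = n.+1 /\ ((absz (j + 1)%R = n.+2 /\ absz (j - 1)%R = n) \/
     (absz (j + 1)%R = n /\ absz (j - 1)%R = n.+2)))%N.
Proof.
case: j => [[|n]|n]; first by left.
- right; exists n; split; first by []. left; split; lia.
- right; exists n; split; first by []. right; split; lia.
Qed.

Lemma cheb_step (y : {poly R}) (t : R) (j : int) :
  ((cheb y `|j + 1|).[t] + (cheb y `|j - 1|).[t]) / 2 = y.[t] * (cheb y `|j|).[t].
Proof.
case: (absz_cases j) => [[-> [-> ->]]|[n [-> [[-> ->]|[-> ->]]]]].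
- by rewrite /= hornerC; field.
- by rewrite cheb_eval; field.
- by rewrite cheb_eval; field.
Qed.

Lemma Er_cheb (y : {poly R}) (t : R) s :
  Er s (fun j => (cheb y `|j|).[t]) = y.[t] ^+ s.
Proof.
suff : forall a, Er s (fun j => a * (cheb y `|j|).[t]) = a * y.[t] ^+ s.
  by move=> /(_ 1); rewrite mul1r; under eq_fun do rewrite mul1r.
elim: s => [|s IH] a /=; first by rewrite hornerC ?expr0 ?mulr1.
have -> : (fun j : int => (a * (cheb y `|j + 1|).[t] + a * (cheb y `|j - 1|).[t]) / 2)
   = (fun j => (a * y.[t]) * (cheb y `|j|).[t]).
  by apply/funext => j; rewrite -mulrA -cheb_step; field.
by rewrite IH exprS mulrA [a * _]mulrC.
Qed.


Definition ptr (y : {poly R}) (d s : nat) : {poly R} :=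
  Ep s (fun j => if (absz j <= d)%N then cheb y (absz j) else 0).

Lemma ptr_size (y : {poly R}) d s : (size y <= 2)%N -> (size (ptr y d s) <= d.+1)%N.
Proof.
move=> hy; apply: Ep_size => j; case: ifP => h; last by rewrite size_poly0.
by apply: leq_trans (cheb_size _ hy) _.
Qed.

Lemma one_le_cosh_tail (mu : R) (d : nat) (j : int) : 0 <= mu -> (d < absz j)%N ->
  1 <= expR (- mu * d%:R) * expR (mu * j%:~R) + expR (- mu * d%:R) * expR (- mu * j%:~R).
Proof.
move=> mu0 hj.
set J : R := j%:~R.
have hJ : d%:R <= `|J|.
  by rewrite /J -intr_norm -natr_absz ler_nat ltnW.
have key : 1 <= expR (- mu * d%:R) * expR (mu * `|J|).
  rewrite -expRD; apply: le_trans (expR_ge1Dx _).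
  rewrite lerDl mulNr addrC -mulrBr mulr_ge0 // subr_ge0 //.
apply: (le_trans key).
have [J0|J0] := leP 0 J.
- rewrite ger0_norm // lerDl mulr_ge0 // expR_ge0.
- have -> : mu * `|J| = - mu * J by rewrite ltr0_norm // mulrN mulNr.
  by rewrite lerDr mulr_ge0 // expR_ge0.
Qed.

Lemma ptr_err (y : {poly R}) (t mu : R) (d s : nat) :
  -1 <= y.[t] <= 1 -> 0 <= mu ->
  `|y.[t] ^+ s - (ptr y d s).[t]| <= 2 * expR (- mu * d%:R) * expR (mu ^+ 2 / 2) ^+ s.
Proof.
move=> hy mu0.
rewrite /ptr Ep_horner -Er_cheb.
set c := fun j : int => (cheb y `|j|).[t].
have -> : Er s c - Er s (fun j => (if (`|j| <= d)%N then cheb y `|j| else 0).[t])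
    = Er s (fun j => if (`|j| <= d)%N then 0 else c j).
  rewrite -[LHS]addrC -mulN1r -Er_lin; congr (Er s _); apply/funext => j.
  by case: ifP => _; rewrite ?horner0 /c; ring.
apply: le_trans (Er_norm _ _) _.
set a := expR (- mu * d%:R).
apply: (@le_trans _ _ (Er s (fun j => a * expR (mu * j%:~R) + a * expR (- mu * j%:~R)))).
  apply: Er_le => j; case: ifP => h.
    by rewrite normr0 addr_ge0 // mulr_ge0 // expR_ge0.
  apply: le_trans (cheb_bound _ hy) _.
  by apply: one_le_cosh_tail => //; rewrite ltnNge h.
have -> : Er s (fun j => a * expR (mu * j%:~R) + a * expR (- mu * j%:~R)) =
   Er s (fun j => a * expR (mu * j%:~R)) + Er s (fun j => a * expR (- mu * j%:~R)).
  rewrite -[X in _ = X + _]mul1r -Er_lin; congr (Er s _); apply/funext => j; by rewrite mul1r.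
rewrite Er_exp Er_exp opprK [expR (- mu) + _]addrC -mulrDr.
have hc : (expR mu + expR (- mu)) / 2 <= expR (mu ^+ 2 / 2).
  by rewrite ler_pdivrMr // mulrC; apply: cosh_le.
have hc0 : 0 <= (expR mu + expR (- mu)) / 2 by rewrite divr_ge0 // addr_ge0 // expR_ge0.
have hX : ((expR mu + expR (- mu)) / 2) ^+ s <= expR (mu ^+ 2 / 2) ^+ s.
  by apply: lerXn2r; rewrite ?nnegrE ?expR_ge0.
have a0 : 0 <= a by rewrite expR_ge0.
move: hX; set C := (_ / 2) ^+ s; set E := _ ^+ s => hX.
nra.
Qed.

End Main1.


Section Main2.
Variable R : realType.

Lemma e_ge2 : 2 <= expR (1 : R).
Proof. by have := expR_ge1Dx (1 : R); rewrite (_ : 1 + 1 = 2 :> R) //. Qed.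

Lemma fact_bound (lam : R) N : 0 <= lam ->
  lam ^+ N.+1 / N.+1`!%:R <= (expR 1 * lam / N.+1%:R) ^+ N.+1.
Proof.
move=> l0.
have h := @expR_ge1Dxn R N.+1%:R N (ler0n _ _).
have h' : (N.+1%:R : R) ^+ N.+1 / N.+1`!%:R <= expR (1:R) ^+ N.+1.
  rewrite -(expRM_natl N.+1 (1:R)) mulr1; lra.
have -> : lam ^+ N.+1 / N.+1`!%:R =
    (lam / N.+1%:R) ^+ N.+1 * (N.+1%:R ^+ N.+1 / N.+1`!%:R).
  rewrite expr_div_n; field.
  by rewrite expf_neq0 ?pnatr_eq0 // -lt0n fact_gt0.
have -> : (expR 1 * lam / N.+1%:R) ^+ N.+1 = (lam / N.+1%:R) ^+ N.+1 * expR 1 ^+ N.+1.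
  by rewrite -mulrA exprMn mulrC.
apply: ler_pM => //; first by rewrite exprn_ge0 // divr_ge0.
Qed.

Lemma ptr0 (y : {poly R}) d : ptr y d 0 = 1.
Proof. by []. Qed.


Lemma cheb_part (y : {poly R}) (t delta : R) (N d i : nat) :
  -1 <= y.[t] <= 1 -> 0 < delta -> delta <= 1 ->
  2 * N%:R * ln (4 / delta) <= d%:R ^+ 2 -> (i <= N)%N ->
  `|y.[t] ^+ i - (ptr y d i).[t]| <= delta / 2.
Proof.
move=> hy d0 d1 hd iN.
case: i iN => [|k] iN.
  by rewrite ptr0 hornerC expr0 subrr normr0 divr_ge0 // ltW.
set i := k.+1.
have i0 : 0 < (i%:R : R) by rewrite ltr0n.
set mu := (d%:R / i%:R : R).
have mu0 : 0 <= mu by rewrite divr_ge0.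
apply: le_trans (ptr_err _ _ hy mu0) _.
rewrite -expRM_natl -mulrA -expRD.
have -> : - mu * d%:R + i%:R * (mu ^+ 2 / 2) = - (d%:R ^+ 2 / (2 * i%:R)).
  rewrite /mu; field; by rewrite lt0r_neq0.
have L4 : 0 < 4 / delta by rewrite divr_gt0.
have hL : ln (4 / delta) <= d%:R ^+ 2 / (2 * i%:R).
  rewrite ler_pdivlMr ?mulr_gt0 //.
  apply: le_trans hd.
  have lnpos : 0 <= ln (4 / delta).
    by apply: ln_ge0; rewrite ler_pdivlMr // mul1r; lra.
  have iN' : (i%:R : R) <= N%:R by rewrite ler_nat.
  nra.
apply: (@le_trans _ _ (2 * expR (- ln (4 / delta)))).
  by rewrite ler_pM2l // ler_expR lerN2.
rewrite expRN lnK ?posrE // invf_div; lra.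
Qed.


Lemma tail_part (lam x delta : R) (N : nat) : 0 < lam -> -1 <= x <= 1 -> 0 < delta ->
  lam * expR 1 ^+ 2 <= N%:R -> ln (2 / delta) <= N%:R ->
  `|expR (- lam) * (expR (lam * x) - \sum_(0 <= i < N.+1) (lam * x) ^+ i / i`!%:R)|
    <= delta / 3.
Proof.
move=> l0 hx d0 hN hL.
set E := expR (1 : R).
have E2 : 2 <= E := e_ge2.
have E0 : 0 < E by lra.
have EE : 4 <= E ^+ 2 by rewrite expr2; nra.
have hlx : `|lam * x| <= lam.
  have hx1 : `|x| <= 1 by rewrite ler_norml; lra.
  by rewrite normrM gtr0_norm // -[X in _ <= X]mulr1 ler_pM2l.
have lamN : lam * 4 <= N%:R by apply: le_trans hN; rewrite ler_pM2l.
have N2 : (N.+2%:R : R) = N%:R + 2 by rewrite -addn2 natrD.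
have T := @exp_tail R (lam * x) N.
have T' := T (ltac:(rewrite N2; lra)).
rewrite normrM gtr0_norm ?expR_gt0 //.
have eL : expR (- lam) <= 1 by rewrite expR_le1; lra.
have A0 : 0 <= `|expR (lam * x) - \sum_(0 <= i < N.+1) (lam * x) ^+ i / i`!%:R| by [].
apply: (@le_trans _ _ (4 / 3 * (`|lam * x| ^+ N.+1 / N.+1`!%:R))).
  by apply: le_trans (ler_piMl A0 eL) T'.
have P1 : `|lam * x| ^+ N.+1 / N.+1`!%:R <= lam ^+ N.+1 / N.+1`!%:R.
  apply: ler_pM; rewrite ?exprn_ge0 ?invr_ge0 ?ler0n //.
  by apply: lerXn2r => //; rewrite nnegrE // ltW.
have P2 := @fact_bound lam N (ltW l0).
have P3 : E * lam / N.+1%:R <= E^-1.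
  have -> : E * lam / N.+1%:R = (lam * E ^+ 2 / N.+1%:R) * E^-1.
    rewrite expr2; field; apply/andP; split; [exact: lt0r_neq0 E0|]; by rewrite addrC natr1 pnatr_eq0.
  rewrite ler_piMl ?invr_ge0 ?ltW //.
  have N1 : (N.+1%:R : R) = N%:R + 1 by rewrite -addn1 natrD.
  rewrite ltr_pdivrMr ?ltr0n // mul1r N1; apply: (le_lt_trans hN); lra.
have P4 : (E * lam / N.+1%:R) ^+ N.+1 <= E^-1 ^+ N.+1.
  apply: lerXn2r P3; rewrite nnegrE ?invr_ge0 ?divr_ge0 ?mulr_ge0 ?ltW //.
have P5 : E^-1 ^+ N = expR (- N%:R).
  by rewrite /E -expRN -expRM_natl mulrN mulr1.
have P6 : expR (- N%:R) <= delta / 2.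
  apply: (@le_trans _ _ (expR (- ln (2 / delta)))).
    by rewrite ler_expR lerN2.
  by rewrite expRN lnK ?posrE ?divr_gt0 // invf_div.
have P7 : E^-1 <= 1/2.
  by rewrite invf_ple ?posrE // ?invf_div; lra.
have P8 : E^-1 ^+ N.+1 <= delta / 4.
  rewrite exprS P5.
  have Q1 : 0 <= expR (- (N%:R : R)) by rewrite expR_ge0.
  have Q2 : 0 <= E^-1 by rewrite invr_ge0 ltW.
  nra.
lra.
Qed.


Lemma approx (b delta : R) (N d : nat) : 0 < b -> 0 < delta -> delta <= 1 ->
  b * expR 1 ^+ 2 / 2 <= N%:R -> ln (2 / delta) <= N%:R ->
  2 * N%:R * ln (4 / delta) <= d%:R ^+ 2 ->
  exists Q : {poly R}, (size Q <= d.+1)%N /\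
    forall t, 0 <= t <= b -> `|expR (- t) - Q.[t]| <= delta * 5 / 6.
Proof.
move=> b0 d0 d1 hb hL hd.
set lam := b / 2.
have l0 : 0 < lam by rewrite divr_gt0.
set y : {poly R} := 1 - (lam^-1)%:P * 'X.
have sy : (size y <= 2)%N.
  rewrite /y; apply: leq_trans (size_polyD _ _) _.
  rewrite geq_max size_polyN size_poly1 /=.
  apply: leq_trans (size_polyMleq _ _) _; rewrite size_polyX.
  by have := size_polyC_leq1 (lam^-1); case: (size _) => [|[|]].
set c := fun i : nat => expR (- lam) * lam ^+ i / i`!%:R.
have c0 : forall i, 0 < c i.
  by move=> i; rewrite /c divr_gt0 ?mulr_gt0 ?expR_gt0 ?exprn_gt0 ?ltr0n ?fact_gt0.
exists (\sum_(0 <= i < N.+1) c i *: ptr y d i).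
split.
  apply: (big_ind (fun p : {poly R} => (size p <= d.+1)%N)).
  - by rewrite size_poly0.
  - move=> p q hp hq; apply: leq_trans (size_polyD _ _) _; by rewrite geq_max hp hq.
  - by move=> i _; apply: leq_trans (size_scale_leq _ _) _; exact: ptr_size.
move=> t /andP[t0 tb].
set x := y.[t].
have hx : x = 1 - t / lam.
  by rewrite /x /y hornerD hornerN hornerC hornerM hornerC hornerX mulrC.
have hx1 : -1 <= x <= 1.
  have h1 : t / lam <= 2 by rewrite ler_pdivrMr // /lam; lra.
  have h2 : 0 <= t / lam by rewrite divr_ge0 // ltW.
  rewrite hx; apply/andP; split; lra.
have eT : expR (- t) = expR (- lam) * expR (lam * x).
  by rewrite -expRD hx; congr expR; field; rewrite lt0r_neq0.
rewrite horner_sum.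
have decomp : expR (- t) - \sum_(0 <= i < N.+1) (c i *: ptr y d i).[t] =
   expR (- lam) * (expR (lam * x) - \sum_(0 <= i < N.+1) (lam * x) ^+ i / i`!%:R)
   + \sum_(0 <= i < N.+1) c i * (x ^+ i - (ptr y d i).[t]).
  have E1 : expR (- lam) * \sum_(0 <= i < N.+1) (lam * x) ^+ i / i`!%:R =
      \sum_(0 <= i < N.+1) c i * x ^+ i.
    by rewrite mulr_sumr; apply: eq_bigr => i _; rewrite /c exprMn; ring.
  under eq_bigr do rewrite hornerZ.
  under [X in _ = _ + X]eq_bigr do rewrite mulrBr.
  rewrite sumrB mulrBr E1 eT; ring.
rewrite decomp.
apply: le_trans (ler_normD _ _) _.
have hb' : lam * expR 1 ^+ 2 <= N%:R.
  by have -> : lam * expR 1 ^+ 2 = b * expR 1 ^+ 2 / 2 by rewrite /lam; ring.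
have h1 := tail_part l0 hx1 d0 hb' hL.
have h2 : `|\sum_(0 <= i < N.+1) c i * (x ^+ i - (ptr y d i).[t])| <= delta / 2.
  apply: le_trans (ler_norm_sum _ _ _) _.
  apply: (@le_trans _ _ (\sum_(0 <= i < N.+1) c i * (delta / 2))).
    apply: ler_sum_nat => i /andP[_ iN].
    rewrite normrM gtr0_norm // ler_pM2l //.
    exact: cheb_part hx1 d0 d1 hd iN.
  rewrite -mulr_suml.
  have hs : \sum_(0 <= i < N.+1) c i <= 1.
    rewrite /c; under eq_bigr do rewrite -mulrA; rewrite -mulr_sumr.
    have hp := expR_psum N.+1 (ltW l0).
    apply: (@le_trans _ _ (expR (- lam) * expR lam)); first by rewrite ler_pM2l ?expR_gt0.
    by rewrite -expRD addNr expR0.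
  have : 0 <= delta / 2 by rewrite divr_ge0 // ltW.
  move=> hd2; nra.
lra.
Qed.

End Main2.

Close Scope classical_set_scope.
Local Open Scope ring_scope.

Lemma size_exact (R : realType) (p : {poly R}) d :
  (size p <= d.+1)%N -> p`_d != 0 -> size p = d.+1.
Proof.
move=> hs hd; apply/eqP; rewrite eqn_leq hs /= ltnNge; apply/negP => /leq_sizeP.
by move=> /(_ d (leqnn d)) /eqP; rewrite (negbTE hd).
Qed.

Lemma sq_err (R : realType) (a s delta : R) : 0 <= a <= 1 -> `|a - s| <= delta ->
  `|a ^+ 2 - s ^+ 2| <= 2 * delta + delta ^+ 2.
Proof.
move=> /andP[a0 a1] h.
have -> : a ^+ 2 - s ^+ 2 = (a - s) * (2 * a - (a - s)) by ring.
rewrite normrM.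
have h2 : `|2 * a - (a - s)| <= 2 + delta.
  apply: le_trans (ler_normB _ _) _.
  rewrite normrM ger0_norm // ger0_norm //; lra.
have n0 : 0 <= `|a - s| by [].
have n1 : 0 <= `|2 * a - (a - s)| by [].
nra.
Qed.

Theorem corollary5 (R : realType) (b delta : R) :
  0 < b -> 0 < delta < 1 ->
  exists s : {poly R},
    size s = (sdeg b delta).+1 /\
    forall t : R, 0 <= t <= b ->
      `|expR (-2 * t) - s.[t] ^+ 2| <= 2 * delta + delta ^+ 2 /\
      2 * delta + delta ^+ 2 <= 3 * delta.
Proof.
move=> b0 /andP[d0 d1].
set M := Num.max (b * expR 1 ^+ 2 / 2) (ln (2 / delta)).
have E0 : 0 < b * expR (1 : R) ^+ 2 / 2 by rewrite divr_gt0 // mulr_gt0 // exprn_gt0 // expR_gt0.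
have M0 : 0 < M by rewrite /M lt_max E0.
set z := Num.ceil M.
have z0 : 0 <= z by rewrite /z ceil_ge0; lra.
set N := `|z|%N.
have hN : (N%:R : R) = theta b delta by rewrite /theta -/M -/z natr_absz ger0_norm.
have hM : M <= N%:R by rewrite hN /theta -/M ceil_ge.
have hb : b * expR 1 ^+ 2 / 2 <= N%:R by apply: le_trans hM; rewrite le_max lexx.
have hL : ln (2 / delta) <= N%:R by apply: le_trans hM; rewrite le_max lexx orbT.
set d := sdeg b delta.
have L4 : 0 <= ln (4 / delta).
  by apply: ln_ge0; rewrite ler_pdivlMr // mul1r; lra.
have hd : 2 * N%:R * ln (4 / delta) <= d%:R ^+ 2.
  set q := 2 * N%:R * ln (4 / delta).
  have q0 : 0 <= q by rewrite /q mulr_ge0 // mulr_ge0 // ler0n.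
  set w := Num.ceil (Num.sqrt q).
  have hdw : (d%:R : R) = w%:~R.
    rewrite /d /sdeg -hN -/q -/w natr_absz ger0_norm //.
    by rewrite /w ceil_ge0; apply: lt_le_trans (sqrtr_ge0 _); lra.
  have hsq : Num.sqrt q <= d%:R by rewrite hdw ceil_ge.
  rewrite -(sqr_sqrtr q0).
  by apply: lerXn2r => //; rewrite nnegrE ?sqrtr_ge0 // ler0n.
clearbody d.
have [Q [sQ hQ]] := approx b0 d0 (ltW d1) hb hL hd.
have fin : forall s : {poly R}, (forall t, 0 <= t <= b -> `|expR (- t) - s.[t]| <= delta) ->
    forall t : R, 0 <= t <= b ->
      `|expR (-2 * t) - s.[t] ^+ 2| <= 2 * delta + delta ^+ 2 /\
      2 * delta + delta ^+ 2 <= 3 * delta.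
  move=> s hs t ht; split; last first.
    have dd : delta ^+ 2 <= delta by rewrite expr2 ler_piMl // ltW.
    lra.
  have -> : expR (-2 * t) = expR (- t) ^+ 2.
    by rewrite -expRM_natl; congr expR; ring.
  apply: sq_err; last exact: hs.
  case/andP: ht => t0 _.
  by rewrite expR_ge0 /= expR_le1; lra.
have [Qd|Qd] := eqVneq Q`_d 0.
- set eta := delta / (6 * b ^+ d).
  have bd : 0 < b ^+ d by rewrite exprn_gt0.
  have eta0 : 0 < eta by rewrite divr_gt0 // mulr_gt0.
  exists (Q + eta *: 'X^d); split.
    apply: size_exact.
      apply: leq_trans (size_polyD _ _) _; rewrite geq_max sQ /=.
      by apply: leq_trans (size_scale_leq _ _) _; rewrite size_polyXn.
    by rewrite coefD coefZ coefXn eqxx Qd add0r mulr1 lt0r_neq0.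
  apply: fin => t /andP[t0 tb].
  rewrite hornerD hornerZ hornerXn.
  have htd : t ^+ d <= b ^+ d by apply: lerXn2r; rewrite ?nnegrE // ltW.
  have he : eta * t ^+ d <= delta / 6.
    apply: le_trans (_ : eta * b ^+ d <= _).
      by rewrite ler_pM2l.
    rewrite /eta le_eqVlt; apply/orP; left; apply/eqP; field; exact: lt0r_neq0.
  have htd0 : 0 <= eta * t ^+ d by rewrite mulr_ge0 ?exprn_ge0 // ltW.
  have := hQ t (ltac:(by apply/andP; split)).
  set u := expR (- t) - Q.[t].
  have -> : expR (- t) - (Q.[t] + eta * t ^+ d) = u - eta * t ^+ d by rewrite /u; ring.
  move=> hu.
  apply: le_trans (ler_normB _ _) _.
  rewrite [`|eta * _|]ger0_norm //; lra.
- exists Q; split; first exact: size_exact.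
  apply: fin => t ht; apply: le_trans (hQ t ht) _; lra.
Qed.
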